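(* For the measured train track $(\tau_0, \left(\begin{smallmatrix} x \\ y \end{smallmatrix}\right))$ we have the following. \begin{enumerate} \item If $y>qx$ then $(\tau_0, \left(\begin{smallmatrix} x \\ y \end{smallmatrix}\right))$ admits $q$ left splittings consecutively and $$(\tau_0, \left(\begin{smallmatrix} x \\ y \end{smallmatrix}\right)) \overset{L}{\rightharpoonup}{}^q \ f_L^q(\tau_0, L^{-q}\left(\begin{smallmatrix} x \\ y \end{smallmatrix}\right)).$$ \item If $x>py$ then $(\tau_0, \left(\begin{smallmatrix} x \\ y \end{smallmatrix}\right))$ admits $p$ right splittings consecutively and $$(\tau_0, \left(\begin{smallmatrix} x \\ y \end{smallmatrix}\right)) \overset{R}{\rightharpoonup}{}^p \ f_R^p (\tau_0, R^{-p}\left(\begin{smallmatrix} x \\ y \end{smallmatrix}\right)).$$ \end{enumerate}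
   Context: $\Sigma_{1,1}=(\mathbb{R}^2\setminus\mathbb{Z}^2)/\mathbb{Z}^2$ is the once-punctured torus; $f_L,f_R$ are the homeomorphisms induced by $L= \left(\begin{smallmatrix}1 & 0 \\ 1 & 1 \end{smallmatrix}\right)$ and $R= \left(\begin{smallmatrix}1 & 1 \\0 & 1\end{smallmatrix}\right)$; $p,q$ are positive integers. The base train track $\tau_0$ is obtained from the simple closed curves of slope $0$ and $\infty$ by flattening the NW and SE right angles at their intersection; it has one large and two small branches, and the measure $\left(\begin{smallmatrix} x \\ y \end{smallmatrix}\right)$ gives weight $x$ to the horizontal small branch, $y$ to the vertical small branch and $x+y$ to the large branch. For a homeomorphism $\phi$, $\phi(\tau,\mu)=(\phi(\tau),\phi_*\mu)$ with $\phi_*\mu(e)=\mu(\phi^{-1}(e))$. $\overset{L}{\rightharpoonup}$ (resp. $\overset{R}{\rightharpoonup}$) denotes a maximal splitting (simultaneous splitting along all large branches of maximal weight) consisting of left (resp. right) splittings, and an exponent means that many consecutive ones. *)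

(* Defs.v *)
(* Combinatorial model of (generic, trivalent, two-switch) measured train
   tracks on the once-punctured torus  S = (R^2 \ Z^2)/Z^2, up to isotopy. *)
From Stdlib Require Import Reals ZArith Bool.
Open Scope R_scope.

(* The three half-branches at a trivalent switch: the one on the "large"
   side of the switch, and the two on the other side, [Lf]/[Rt] being the one
   on the left/right when one stands on the switch and faces from the
   large side towards the two-branch side (standard orientation of R^2). *)
Inductive role := Big | Lf | Rt.

(* Half-branches ("darts"): (switch, role); the two switches are [false]
   and [true]. *)
Definition dart := (bool * role)%type.

(* Z^2 = H_1 of the torus = deck group of R^2 -> T^2. *)
Definition vec := (Z * Z)%type.
Definition vadd (a b : vec) : vec := ((fst a + fst b)%Z, (snd a + snd b)%Z).
Definition vsub (a b : vec) : vec := ((fst a - fst b)%Z, (snd a - snd b)%Z).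
Definition vzero : vec := (0%Z, 0%Z).

(* A measured train track (combinatorial data + isotopy marking + measure):
   - [tpair d] is the other end of the branch whose end is the dart d;
   - [tdisp d] is the marking: choosing a lift in R^2 of each switch, the lift
     of the branch leaving the lift of switch [fst d] through d ends at
     (lift of switch [fst (tpair t d)]) + [tdisp t d]  (a deck translation);
   - [twt d] is the weight (measure) of the branch containing the dart d. *)
Record mtt := MTT { tpair : dart -> dart ; tdisp : dart -> vec ; twt : dart -> R }.

(* Isotopy of measured train tracks: an isomorphism of the switch structures
   (a permutation of the two switches preserving roles, i.e. orientation)
   matching the branches, the weights, and the markings up to change of the
   chosen lifts of the switches (c). *)
Definition tt_equiv (t1 t2 : mtt) : Prop :=
  exists (f : bool -> bool) (c : bool -> vec),
    (forall b b', f b = f b' -> b = b') /\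
    forall d : dart,
      let fd := fun e : dart => (f (fst e), snd e) in
      tpair t2 (fd d) = fd (tpair t1 d) /\
      tdisp t2 (fd d) = vsub (vadd (tdisp t1 d) (c (fst d))) (c (fst (tpair t1 d))) /\
      twt t2 (fd d) = twt t1 d.

(* Switch [false] is at the SW end
   and switch [true] at the NE end of the large branch (the NW and SE right
   angles at the crossing (1/2,1/2) of the slope-0 and slope-infinity curves
   being flattened); at [false] the W arm (horizontal) is on the right and the
   S arm (vertical) on the left; at [true] the E arm (horizontal) is on the
   right and the N arm (vertical) on the left. *)
Definition tau0 (v : R * R) : mtt :=
  MTT (fun d => (negb (fst d), snd d))
      (fun d => match d with
                | (_, Big) => vzero
                | (false, Rt) => ((-1)%Z, 0%Z)
                | (true, Rt) => (1%Z, 0%Z)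
                | (false, Lf) => (0%Z, (-1)%Z)
                | (true, Lf) => (0%Z, 1%Z)
                end)
      (fun d => match snd d with
                | Big => fst v + snd v
                | Rt => fst v
                | Lf => snd v
                end).

(* The homeomorphism f_A of S induced by A in SL(2,Z) (acting on column
   vectors), and its action phi(tau,mu) = (phi(tau), phi_* mu). *)
Definition hact (A : vec -> vec) (t : mtt) : mtt :=
  MTT (tpair t) (fun d => A (tdisp t d)) (twt t).

Definition matL (a : vec) : vec := (fst a, (fst a + snd a)%Z).
Definition matR (a : vec) : vec := ((fst a + snd a)%Z, snd a).
Definition fL := hact matL.
Definition fR := hact matR.

Definition Linv_mu (v : R * R) : R * R := (fst v, snd v - fst v).
Definition Rinv_mu (v : R * R) : R * R := (fst v - snd v, snd v).

Definition is_large (t : mtt) (u : bool) : Prop := tpair t (u, Big) = (negb u, Big).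

(* ... and of maximal weight among large branches.  (A two-switch trivalent
   track has at most one large branch, so a maximal splitting splits exactly
   this branch.) *)
Definition large_max (t : mtt) (u : bool) : Prop :=
  is_large t u /\ forall u', is_large t u' -> twt t (u', Big) <= twt t (u, Big).

(* Shift of the markings when all new switches are placed near the lift of
   the large branch starting at the lift of switch u. *)
Definition tsh (t : mtt) (u : bool) (d : dart) : vec :=
  if Bool.eqb (fst d) u then vzero else tdisp t (u, Big).

(* Left split along the large branch: the new small (diagonal) branch joins
   the two [Lf] darts; [rhoinvL] sends a non-diagonal new dart to the old
   small dart whose branch now ends there. *)
Definition rhoL (d : dart) : dart :=
  match d with (b, Lf) => (b, Big) | (b, Rt) => (negb b, Rt) | (b, Big) => (b, Big) end.
Definition rhoinvL (d : dart) : dart :=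
  match d with (b, Big) => (b, Lf) | (b, Rt) => (negb b, Rt) | (b, Lf) => (b, Lf) end.

Definition splitL (u : bool) (t : mtt) : mtt :=
  MTT (fun x => match snd x with
                | Lf => (negb (fst x), Lf)
                | _ => rhoL (tpair t (rhoinvL x)) end)
      (fun x => match snd x with
                | Lf => vzero
                | _ => let d := rhoinvL x in
                       vsub (vadd (tdisp t d) (tsh t u d)) (tsh t u (tpair t d)) end)
      (fun x => match snd x with
                | Lf => twt t (u, Lf) - twt t (negb u, Rt)
                | _ => twt t (rhoinvL x) end).

Definition rhoR (d : dart) : dart :=
  match d with (b, Rt) => (b, Big) | (b, Lf) => (negb b, Lf) | (b, Big) => (b, Big) end.
Definition rhoinvR (d : dart) : dart :=
  match d with (b, Big) => (b, Rt) | (b, Lf) => (negb b, Lf) | (b, Rt) => (b, Rt) end.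

Definition splitR (u : bool) (t : mtt) : mtt :=
  MTT (fun x => match snd x with
                | Rt => (negb (fst x), Rt)
                | _ => rhoR (tpair t (rhoinvR x)) end)
      (fun x => match snd x with
                | Rt => vzero
                | _ => let d := rhoinvR x in
                       vsub (vadd (tdisp t d) (tsh t u d)) (tsh t u (tpair t d)) end)
      (fun x => match snd x with
                | Rt => twt t (u, Rt) - twt t (negb u, Lf)
                | _ => twt t (rhoinvR x) end).

(* (t ⇀^L t'): t admits a maximal splitting which is a left splitting
   (the measure forces the left split: strict inequality), with result t'. *)
Definition max_left_split (t t' : mtt) : Prop :=
  exists u, large_max t u /\ twt t (negb u, Rt) < twt t (u, Lf) /\ t' = splitL u t.
Definition max_right_split (t t' : mtt) : Prop :=
  exists u, large_max t u /\ twt t (negb u, Lf) < twt t (u, Rt) /\ t' = splitR u t.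

Inductive nsteps (Rel : mtt -> mtt -> Prop) : nat -> mtt -> mtt -> Prop :=
| nsteps0 : forall t, nsteps Rel 0 t t
| nstepsS : forall n t1 t2 t3, Rel t1 t2 -> nsteps Rel n t2 t3 -> nsteps Rel (S n) t1 t3.

(* Main.v *)
Require Import Defs.
From Stdlib Require Import Reals ZArith Bool Lia Lra.
Open Scope R_scope.

Definition vsg (b : bool) (v : vec) : vec :=
  if b then ((- fst v)%Z, (- snd v)%Z) else v.
Definition pk {A : Type} (a r l : A) (ro : role) : A :=
  match ro with Big => a | Rt => r | Lf => l end.

Definition isM (t : mtt) (a r l : vec) (wB wR wL : R) : Prop :=
  (forall d, tpair t d = (negb (fst d), snd d)) /\
  (forall d, tdisp t d = vsg (fst d) (pk a r l (snd d))) /\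
  (forall d, twt t d = pk wB wR wL (snd d)).

Definition crel (a r l a' r' l' : vec) : Prop :=
  exists d1 d2 : Z,
  ((fst a' = fst a + d1 /\ fst r' = fst r + d1 /\ fst l' = fst l + d1 /\
    snd a' = snd a + d2 /\ snd r' = snd r + d2 /\ snd l' = snd l + d2) \/
   (fst a' = d1 - fst a /\ fst r' = d1 - fst r /\ fst l' = d1 - fst l /\
    snd a' = d2 - snd a /\ snd r' = d2 - snd r /\ snd l' = d2 - snd l))%Z.

Lemma equivM t1 t2 a r l a' r' l' wB wR wL :
  isM t1 a r l wB wR wL -> isM t2 a' r' l' wB wR wL -> crel a r l a' r' l' ->
  tt_equiv t1 t2.
Proof.
  intros [P1 [D1 W1]] [P2 [D2 W2]] [d1 [d2 [H|H]]].
  - exists (fun b : bool => b), (fun b : bool => if b then vzero else (d1, d2)).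
    split; [intros b b' E; exact E|].
    intros [b ro]; cbv zeta; simpl.
    rewrite P1, P2, D1, D2, W1, W2; simpl.
    destruct a, r, l, a', r', l'; simpl in *.
    repeat split; destruct b, ro; unfold vsub, vadd, vzero; simpl; f_equal; lia.
  - exists negb, (fun b : bool => if b then vzero else ((- d1)%Z, (- d2)%Z)).
    split; [intros b b' E; destruct b, b'; simpl in *; congruence|].
    intros [b ro]; cbv zeta; simpl.
    rewrite P1, P2, D1, D2, W1, W2; simpl.
    destruct a, r, l, a', r', l'; simpl in *.
    repeat split; destruct b, ro; unfold vsub, vadd, vzero; simpl; f_equal; lia.
Qed.

Lemma isM_w t a r l wB wR wL wB' wR' wL' :
  isM t a r l wB wR wL -> wB = wB' -> wR = wR' -> wL = wL' -> isM t a r l wB' wR' wL'.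
Proof. intros H -> -> ->; exact H. Qed.

Lemma isM_tau0 w : isM (tau0 w) vzero ((-1)%Z, 0%Z) (0%Z, (-1)%Z) (fst w + snd w) (fst w) (snd w).
Proof.
  repeat split; intros [[|] [| |]]; reflexivity.
Qed.

Lemma isM_hact (A : vec -> vec) t a r l wB wR wL :
  (forall v, A (vsg true v) = vsg true (A v)) ->
  isM t a r l wB wR wL -> isM (hact A t) (A a) (A r) (A l) wB wR wL.
Proof.
  intros HA [P [D W]]; repeat split; intros [b ro]; simpl; auto;
  rewrite D; destruct b, ro; simpl; auto; apply (HA _).
Qed.

Lemma isM_splitL t a r l wB wR wL :
  isM t a r l wB wR wL ->
  isM (splitL false t) (vsub l a) (vsub a r) vzero wL wR (wL - wR).
Proof.
  intros [P [D W]]; repeat split; intros [b ro];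
  destruct b, ro; unfold splitL, tsh, rhoinvL, rhoL; simpl;
  rewrite ?P, ?D, ?W; simpl; rewrite ?P, ?D, ?W; simpl; auto;
  destruct a, r, l; unfold vsub, vadd, vzero; simpl; f_equal; lia.
Qed.

Lemma isM_splitR t a r l wB wR wL :
  isM t a r l wB wR wL ->
  isM (splitR false t) (vsub r a) vzero (vsub a l) wR (wR - wL) wL.
Proof.
  intros [P [D W]]; repeat split; intros [b ro];
  destruct b, ro; unfold splitR, tsh, rhoinvR, rhoR; simpl;
  rewrite ?P, ?D, ?W; simpl; rewrite ?P, ?D, ?W; simpl; auto;
  destruct a, r, l; unfold vsub, vadd, vzero; simpl; f_equal; lia.
Qed.

Lemma nsteps_iter (Rel : mtt -> mtt -> Prop) (f : mtt -> mtt) t0 :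
  forall n j, (forall i, (j <= i < j + n)%nat -> Rel (Nat.iter i f t0) (f (Nat.iter i f t0))) ->
  nsteps Rel n (Nat.iter j f t0) (Nat.iter (j + n) f t0).
Proof.
  induction n; intros j H.
  - rewrite Nat.add_0_r; constructor.
  - econstructor.
    + apply H; lia.
    + replace (j + S n)%nat with (S j + n)%nat by lia.
      apply (IHn (S j)); intros i Hi; apply H; lia.
Qed.

Lemma Liter x y k : Nat.iter k Linv_mu (x, y) = (x, y - INR k * x).
Proof.
  induction k; simpl Nat.iter; [f_equal; simpl; ring|].
  rewrite IHk; unfold Linv_mu; simpl fst; simpl snd; rewrite (S_INR k); f_equal; ring.
Qed.

Lemma Riter x y k : Nat.iter k Rinv_mu (x, y) = (x - INR k * y, y).
Proof.
  induction k; simpl Nat.iter; [f_equal; simpl; ring|].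
  rewrite IHk; unfold Rinv_mu; simpl fst; simpl snd; rewrite (S_INR k); f_equal; ring.
Qed.

Lemma targetL w k : isM (Nat.iter k fL (tau0 w)) vzero ((-1)%Z, (- Z.of_nat k)%Z) (0%Z, (-1)%Z)
  (fst w + snd w) (fst w) (snd w).
Proof.
  induction k.
  - apply isM_tau0.
  - simpl Nat.iter. unfold fL at 1.
    assert (H := isM_hact matL _ _ _ _ _ _ _ (fun v => ltac:(destruct v; unfold matL; simpl; f_equal; lia)) IHk).
    replace (matL vzero) with vzero in H by reflexivity.
    replace (matL ((-1)%Z, (- Z.of_nat k)%Z)) with ((-1)%Z, (- Z.of_nat (S k))%Z) in H
      by (unfold matL; cbn [fst snd]; f_equal; lia).
    exact H.
Qed.

Lemma targetR w k : isM (Nat.iter k fR (tau0 w)) vzero ((-1)%Z, 0%Z) ((- Z.of_nat k)%Z, (-1)%Z)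
  (fst w + snd w) (fst w) (snd w).
Proof.
  induction k.
  - apply isM_tau0.
  - simpl Nat.iter. unfold fR at 1.
    assert (H := isM_hact matR _ _ _ _ _ _ _ (fun v => ltac:(destruct v; unfold matR; simpl; f_equal; lia)) IHk).
    replace (matR vzero) with vzero in H by reflexivity.
    replace (matR ((-1)%Z, 0%Z)) with ((-1)%Z, 0%Z) in H by reflexivity.
    replace (matR ((- Z.of_nat k)%Z, (-1)%Z)) with ((- Z.of_nat (S k))%Z, (-1)%Z) in H
      by (unfold matR; cbn [fst snd]; f_equal; lia).
    exact H.
Qed.

Lemma invL x y k : exists a r l,
  isM (Nat.iter k (splitL false) (tau0 (x, y))) a r l (x + y - INR k * x) x (y - INR k * x) /\
  crel a r l vzero ((-1)%Z, (- Z.of_nat k)%Z) (0%Z, (-1)%Z).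
Proof.
  induction k.
  - exists vzero, ((-1)%Z, 0%Z), (0%Z, (-1)%Z); split.
    + eapply isM_w; [apply isM_tau0| simpl; ring ..].
    + exists 0%Z, 0%Z; left; simpl; lia.
  - destruct IHk as [a [r [l [H C]]]].
    exists (vsub l a), (vsub a r), vzero; split.
    + simpl Nat.iter. eapply isM_w; [apply (isM_splitL _ _ _ _ _ _ _ H)|rewrite ?(S_INR k); ring..].
    + destruct C as [d1 [d2 C]]; exists 0%Z, (-1)%Z.
      destruct a, r, l; unfold vsub, vzero in *; cbn [fst snd] in *.
      destruct C as [C|C]; [right|left]; lia.
Qed.

Lemma invR x y k : exists a r l,
  isM (Nat.iter k (splitR false) (tau0 (x, y))) a r l (x + y - INR k * y) (x - INR k * y) y /\
  crel a r l vzero ((-1)%Z, 0%Z) ((- Z.of_nat k)%Z, (-1)%Z).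
Proof.
  induction k.
  - exists vzero, ((-1)%Z, 0%Z), (0%Z, (-1)%Z); split.
    + eapply isM_w; [apply isM_tau0| simpl; ring ..].
    + exists 0%Z, 0%Z; left; simpl; lia.
  - destruct IHk as [a [r [l [H C]]]].
    exists (vsub r a), vzero, (vsub a l); split.
    + simpl Nat.iter. eapply isM_w; [apply (isM_splitR _ _ _ _ _ _ _ H)|rewrite ?(S_INR k); ring..].
    + destruct C as [d1 [d2 C]]; exists (-1)%Z, 0%Z.
      destruct a, r, l; unfold vsub, vzero in *; cbn [fst snd] in *.
      destruct C as [C|C]; [right|left]; lia.
Qed.

Theorem corollary3p11 (x y : R) (p q : nat) :
  0 <= x -> 0 <= y -> (0 < p)%nat -> (0 < q)%nat ->
  (y > INR q * x ->
     exists t, nsteps max_left_split q (tau0 (x, y)) t /\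
               tt_equiv t (Nat.iter q fL (tau0 (Nat.iter q Linv_mu (x, y))))) /\
  (x > INR p * y ->
     exists t, nsteps max_right_split p (tau0 (x, y)) t /\
               tt_equiv t (Nat.iter p fR (tau0 (Nat.iter p Rinv_mu (x, y))))).
Proof.
  intros Hx Hy Hp Hq; split; intro Hlt.
  - exists (Nat.iter q (splitL false) (tau0 (x, y))); split.
    + apply (nsteps_iter _ _ _ q 0%nat); intros i Hi.
      destruct (invL x y i) as [a [r [l [[P [D W]] _]]]].
      exists false; split; [split|split].
      * unfold is_large; rewrite P; reflexivity.
      * intros u' _; rewrite !W; simpl; lra.
      * rewrite !W; simpl.
        assert (INR (S i) <= INR q) by (apply le_INR; lia).
        rewrite S_INR in H; nra.
      * reflexivity.
    + destruct (invL x y q) as [a [r [l [H C]]]].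
      rewrite Liter.
      eapply equivM; [exact H| |exact C].
      eapply isM_w; [apply targetL|simpl; ring..].
  - exists (Nat.iter p (splitR false) (tau0 (x, y))); split.
    + apply (nsteps_iter _ _ _ p 0%nat); intros i Hi.
      destruct (invR x y i) as [a [r [l [[P [D W]] _]]]].
      exists false; split; [split|split].
      * unfold is_large; rewrite P; reflexivity.
      * intros u' _; rewrite !W; simpl; lra.
      * rewrite !W; simpl.
        assert (INR (S i) <= INR p) by (apply le_INR; lia).
        rewrite S_INR in H; nra.
      * reflexivity.
    + destruct (invR x y p) as [a [r [l [H C]]]].
      rewrite Riter.
      eapply equivM; [exact H| |exact C].
      eapply isM_w; [apply targetR|simpl; ring..].
Qed.
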